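(* Let \[ g=\begin{pmatrix}A&C\\0&B\end{pmatrix}\in\mathrm{GL}_{n+m}(L), \] where $A\in\mathrm{GL}_n(L)$ and $B\in\mathrm{GL}_m(L)$ are monomial matrices in the sense that each row of $A$ and each column of $B$ contains exactly one nonzero entry. For $1\le i\le n$ let $\alpha_i$ be the valuation of the unique nonzero entry in row $i$ of $A$, and for $1\le j\le m$ let $\beta_j$ be the valuation of the unique nonzero entry in column $j$ of $B$. Order the combined list $\{\alpha_1,\dots,\alpha_n,\beta_1,\dots,\beta_m\}$ as $\gamma_1\le\gamma_2\le\cdots\le\gamma_{n+m}$. Then \[ g\in K\,\mathrm{diag}(t^{\gamma_1},\dots,t^{\gamma_{n+m}})\,K \] if and only if every entry $c_{ij}$ of the block $C$ satisfies $v(c_{ij})\ge\min\{\alpha_i,\beta_j\}$.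
   Context: $F$ is a non-Archimedean local field with uniformizer $t$; $L$ is the completion of the maximal unramified extension of $F$, with ring of integers $\mathcal O_L$ and normalized valuation $v$ ($v(t)=1$). $K=\mathrm{GL}_{n+m}(\mathcal O_L)$. *)

(* Defs.v *)
From HB Require Import structures.
From mathcomp Require Import all_boot all_order all_algebra.
Set Implicit Arguments. Unset Strict Implicit. Unset Printing Implicit Defensive.
Import Order.TTheory GRing.Theory Num.Theory.
Local Open Scope ring_scope.

(* A normalized discrete valuation v on the field L (values on nonzero
   elements; v 0 is conventionally +oo and the value stored for 0 is
   irrelevant), with uniformizer t (v t = 1). *)
Definition discrete_valuation (L : fieldType) (v : L -> int) (t : L) : Prop :=
  [/\ forall x y : L, x != 0 -> y != 0 -> v (x * y) = v x + v y,
      forall x y : L, x != 0 -> y != 0 -> x + y != 0 ->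
        Num.min (v x) (v y) <= v (x + y),
      t != 0 & v t = 1].

Definition vge (L : fieldType) (v : L -> int) (x : L) (k : int) : Prop :=
  x = 0 \/ k <= v x.

Definition integral (L : fieldType) (v : L -> int) (x : L) : Prop := vge v x 0.

(* K = GL_N(O_L): invertible matrices with entries in O_L whose inverse
   also has entries in O_L *)
Definition in_K (L : fieldType) (v : L -> int) (N : nat) (M : 'M[L]_N) : Prop :=
  [/\ M \in unitmx, forall i j, integral v (M i j)
    & forall i j, integral v (invmx M i j)].

Definition in_KdK (L : fieldType) (v : L -> int) (N : nat)
    (g : 'M[L]_N) (d : 'rV[L]_N) : Prop :=
  exists k1 k2 : 'M[L]_N, [/\ in_K v k1, in_K v k2 & g = k1 *m diag_mx d *m k2].

Definition row_monomial (L : fieldType) (n : nat) (A : 'M[L]_n) : Prop :=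
  forall i, exists! j, A i j != 0.

Definition col_monomial (L : fieldType) (m : nat) (B : 'M[L]_m) : Prop :=
  forall j, exists! i, B i j != 0.

(* Main.v *)
Require Import Defs.
From HB Require Import structures.
From mathcomp Require Import all_boot all_order all_algebra.
From mathcomp Require Import all_fingroup zify ring lra.
Import Order.TTheory GRing.Theory Num.Theory.
Local Open Scope ring_scope.
Set Implicit Arguments. Unset Strict Implicit.

Lemma dv_v1 (L : fieldType) (v : L -> int) t : discrete_valuation v t -> v 1 = 0.
Proof.
case=> hM _ _ _; have := hM 1 1 (oner_neq0 _) (oner_neq0 _); rewrite mulr1.
lia.
Qed.

Lemma dv_vN1 (L : fieldType) (v : L -> int) t : discrete_valuation v t -> v (-1) = 0.
Proof.
move=> hv; have h1 := dv_v1 hv; case: hv => hM _ _ _.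
have n1 : (-1 : L) != 0 by rewrite oppr_eq0 oner_neq0.
have := hM _ _ n1 n1; rewrite mulrNN mulr1 h1; lia.
Qed.

Lemma dv_vN (L : fieldType) (v : L -> int) t x : discrete_valuation v t -> x != 0 -> v (- x) = v x.
Proof.
move=> hv nx; have h1 := dv_vN1 hv; case: hv => hM _ _ _.
have n1 : (-1 : L) != 0 by rewrite oppr_eq0 oner_neq0.
by rewrite -mulN1r hM // h1 add0r.
Qed.

Lemma dv_vV (L : fieldType) (v : L -> int) t x : discrete_valuation v t -> x != 0 -> v (x^-1) = - v x.
Proof.
move=> hv nx; have h1 := dv_v1 hv; case: hv => hM _ _ _.
have := hM _ _ nx (invr_neq0 nx); rewrite mulfV // h1; lia.
Qed.

Lemma dv_vM (L : fieldType) (v : L -> int) t x y : discrete_valuation v t -> x != 0 -> y != 0 -> v (x * y) = v x + v y.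
Proof. by case=> hM _ _ _; apply: hM. Qed.

Lemma dv_t0 (L : fieldType) (v : L -> int) t : discrete_valuation v t -> t != 0.
Proof. by case. Qed.

Lemma dv_expn (L : fieldType) (v : L -> int) t (k : nat) : discrete_valuation v t -> v (t ^+ k) = k%:Z.
Proof.
move=> hv; elim: k => [|k IH]; first by rewrite expr0 (dv_v1 hv).
have t0 := dv_t0 hv.
rewrite exprS (dv_vM hv) ?expf_neq0 // IH; case: hv => _ _ _ ->; lia.
Qed.

Lemma dv_expz (L : fieldType) (v : L -> int) t (z : int) : discrete_valuation v t -> (t ^ z != 0) /\ v (t ^ z) = z.
Proof.
move=> hv; have t0 := dv_t0 hv.
case: z => k.
  by change (t ^ Posz k) with (t ^+ k); rewrite expf_neq0 // (dv_expn _ hv).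
change (t ^ Negz k) with ((t ^+ k.+1)^-1); rewrite invr_neq0 ?expf_neq0 //; split=> //.
rewrite (dv_vV hv) ?expf_neq0 // (dv_expn _ hv) NegzE; lia.
Qed.

Lemma vge0 (L : fieldType) (v : L -> int) k : vge v 0 k.
Proof. by left. Qed.

Lemma vge_le (L : fieldType) (v : L -> int) x k k' : k' <= k -> vge v x k -> vge v x k'.
Proof. move=> le [->|h]; [left|right] => //; exact: le_trans h. Qed.

Lemma vgeD (L : fieldType) (v : L -> int) t x y k : discrete_valuation v t ->
  vge v x k -> vge v y k -> vge v (x + y) k.
Proof.
move=> hv [->|hx]; first by rewrite add0r.
move=> [->|hy]; first by rewrite addr0; right.
have [->|nx] := eqVneq x 0; first by rewrite add0r; right.
have [->|ny] := eqVneq y 0; first by rewrite addr0; right.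
have [->|nxy] := eqVneq (x + y) 0; first by left.
right; case: hv => _ hT _ _; apply: le_trans (hT _ _ nx ny nxy).
by rewrite le_min hx hy.
Qed.

Lemma vgeN (L : fieldType) (v : L -> int) t x k : discrete_valuation v t ->
  vge v x k -> vge v (- x) k.
Proof.
move=> hv [->|hx]; first by rewrite oppr0; left.
have [->|nx] := eqVneq x 0; first by rewrite oppr0; left.
by right; rewrite (dv_vN hv nx).
Qed.

Lemma vgeM (L : fieldType) (v : L -> int) t x y a b : discrete_valuation v t ->
  vge v x a -> vge v y b -> vge v (x * y) (a + b).
Proof.
move=> hv [->|hx]; first by rewrite mul0r; left.
move=> [->|hy]; first by rewrite mulr0; left.
have [->|nx] := eqVneq x 0; first by rewrite mul0r; left.
have [->|ny] := eqVneq y 0; first by rewrite mulr0; left.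
by right; rewrite (dv_vM hv nx ny) lerD.
Qed.

Lemma vge_v (L : fieldType) (v : L -> int) x : vge v x (v x).
Proof. by right. Qed.

Lemma vge_sum (L : fieldType) (v : L -> int) t (I : Type) (r : seq I) (P : pred I) F k :
  discrete_valuation v t -> (forall i, P i -> vge v (F i) k) ->
  vge v (\sum_(i <- r | P i) F i) k.
Proof.
move=> hv h; apply: (big_ind (fun x => vge v x k)) => //; first by left.
by move=> x y; apply: vgeD hv.
Qed.

Lemma vge_prod (L : fieldType) (v : L -> int) t (I : Type) (r : seq I) (P : pred I) F a :
  discrete_valuation v t -> (forall i, P i -> vge v (F i) (a i)) ->
  vge v (\prod_(i <- r | P i) F i) (\sum_(i <- r | P i) a i).
Proof.
move=> hv h; apply: (big_ind2 (fun x b => vge v x b)) => //.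
  by right; rewrite (dv_v1 hv).
by move=> x1 x2 y1 y2; apply: vgeM hv.
Qed.

Lemma vge_sign (L : fieldType) (v : L -> int) t (b : bool) : discrete_valuation v t ->
  vge v ((-1) ^+ b) 0.
Proof.
move=> hv; case: b; rewrite ?expr1 ?expr0; right; by rewrite ?(dv_vN1 hv) ?(dv_v1 hv).
Qed.

Lemma vge_det (L : fieldType) (v : L -> int) t k (M : 'M[L]_k) : discrete_valuation v t ->
  (forall i j, integral v (M i j)) -> integral v (\det M).
Proof.
move=> hv h; rewrite /integral /determinant; apply: (vge_sum _ hv) => s _.
have hp : vge v (\prod_i M i ((s : 'S_k) i)) (\sum_(i < k) (0:int)).
  by apply: (vge_prod _ hv) => i _; exact: h.
rewrite big1_eq in hp.
by have := vgeM hv (vge_sign (odd_perm s) hv) hp; rewrite add0r.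
Qed.

Lemma vge_mulmx (L : fieldType) (v : L -> int) t a b c (X : 'M[L]_(a,b)) (Y : 'M[L]_(b,c)) :
  discrete_valuation v t ->
  (forall i j, integral v (X i j)) -> (forall i j, integral v (Y i j)) ->
  forall i j, integral v ((X *m Y) i j).
Proof.
move=> hv hX hY i j; rewrite mxE /integral; apply: (vge_sum _ hv) => l _.
by have := vgeM hv (hX i l) (hY l j); rewrite addr0.
Qed.

Lemma inv_of (R : comUnitRingType) N (P Q : 'M[R]_N) : P *m Q = 1%:M -> invmx P = Q.
Proof.
move=> PQ; have [uP _] := mulmx1_unit PQ.
by rewrite -[invmx P]mulmx1 -PQ mulmxA mulVmx // mul1mx.
Qed.

Lemma in_K_of (L : fieldType) (v : L -> int) N (P Q : 'M[L]_N) :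
  (forall i j, integral v (P i j)) -> (forall i j, integral v (Q i j)) ->
  P *m Q = 1%:M -> in_K v P.
Proof.
move=> hP hQ PQ; have [uP _] := mulmx1_unit PQ.
by split => // i j; rewrite (inv_of PQ).
Qed.

Lemma in_K_mul (L : fieldType) (v : L -> int) t N (P Q : 'M[L]_N) :
  discrete_valuation v t -> in_K v P -> in_K v Q -> in_K v (P *m Q).
Proof.
move=> hv [uP iP iP'] [uQ iQ iQ'].
apply: (in_K_of (Q := invmx Q *m invmx P)).
- exact: vge_mulmx hv iP iQ.
- exact: vge_mulmx hv iQ' iP'.
by rewrite mulmxA -(mulmxA P) mulmxV // mulmx1 mulmxV.
Qed.

Lemma det_mul_expand (R : comRingType) k N (Z : 'M[R]_(k,N)) (Y : 'M[R]_(N,k)) :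
  \det (Z *m Y) = \sum_(f : {ffun 'I_k -> 'I_N})
      (\prod_i Z i (f i)) * \det (\matrix_(i,j) Y (f i) j).
Proof.
rewrite /determinant.
transitivity (\sum_(s : 'S_k) \sum_(f : {ffun 'I_k -> 'I_N})
   (-1) ^+ s * \prod_i (Z i (f i) * Y (f i) (s i))).
  apply: eq_bigr => s _; rewrite -big_distrr /=; congr (_ * _).
  rewrite -(bigA_distr_bigA (fun i l => Z i l * Y l (s i))) /=.
  by apply: eq_bigr => i _; rewrite mxE.
rewrite exchange_big /=; apply: eq_bigr => f _.
rewrite big_distrr /=; apply: eq_bigr => s _.
rewrite big_split /= mulrCA; congr (_ * (_ * _)).
by apply: eq_bigr => i _; rewrite mxE.
Qed.

Lemma cb_bound (L : fieldType) (v : L -> int) t k N (X : 'M[L]_(k,N)) (Y : 'M[L]_(N,k))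
    (g : 'I_N -> int) (b : int) :
  discrete_valuation v t ->
  (forall i j, integral v (X i j)) -> (forall i j, integral v (Y i j)) ->
  (forall S : {set 'I_N}, #|S| = k -> b <= \sum_(x in S) g x) ->
  vge v (\det (X *m diag_mx (\row_l t ^ g l) *m Y)) b.
Proof.
move=> hv hX hY hS; rewrite det_mul_expand; apply: (vge_sum _ hv) => f _.
have [inj|ninj] := boolP (injectiveb f); last first.
  case/injectivePn: ninj => i1 [i2 Di12 Ef12].
  by rewrite (determinant_alternate Di12) ?mulr0; [left|move=> j; rewrite !mxE Ef12].
have hp : vge v (\prod_i (X *m diag_mx (\row_l t ^ g l)) i (f i)) (\sum_i g (f i)).
  apply: (vge_prod _ hv) => i _; rewrite mul_mx_diag !mxE.
  have [_ ht] := dv_expz (g (f i)) hv.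
  by have := vgeM hv (hX i (f i)) (vge_v v (t ^ g (f i))); rewrite ht add0r.
have hd : integral v (\det (\matrix_(i0, j0) Y (f i0) j0)).
  by apply: (vge_det hv) => i j; rewrite mxE.
have := vgeM hv hp hd; rewrite addr0; apply: vge_le.
have /injectiveP finj := inj.
rewrite -(big_imset _ (in2W finj)) /=; apply: hS.
by rewrite card_imset // ?cardsT ?card_ord.
Qed.

Lemma set_bound N (g : 'I_N -> int) (c : int) (S : {set 'I_N}) :
  #|S| = (#|[set x | g x <= c]|).+1 ->
  \sum_(x in [set x | g x <= c]) g x + c < \sum_(x in S) g x.
Proof.
set Q := [set x | g x <= c] => hS.
rewrite (big_setID (A := Q) S) (big_setID (A := S) Q) /= setIC.
have h1 : \sum_(x in Q :\: S) g x <= \sum_(x in Q :\: S) c.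
  by apply: ler_sum => x; rewrite inE in_set => /andP[_ ->].
have h2 : \sum_(x in S :\: Q) (c + 1) <= \sum_(x in S :\: Q) g x.
  apply: ler_sum => x; rewrite inE in_set => /andP[/negP hx _].
  by rewrite lezD1 ltNge; apply/negP.
rewrite !sumr_const in h1 h2.
have c1 := cardsID Q S; have c2 := cardsID S Q.
rewrite setIC in c2.
have hab : #|S :\: Q| = (#|Q :\: S|).+1.
  apply/(@addnI #|S :&: Q|); rewrite c1 hS -c2 addnS //.
rewrite hab in h2; rewrite -mulr_natr in h1; rewrite -mulr_natr in h2.
move: h1 h2; set a := \sum_(i in S :\: Q) g i; set b := \sum_(i in Q :\: S) g i.
set s0 := \sum_(i in S :&: Q) g i.
rewrite -addn1 natrD mulrDr mulr1 mulrDl mul1r.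
have : 0 <= (#|Q :\: S|)%:R :> int by rewrite ler0n.
move: (c * _) => w; move: (_%:R : int) => z.
move=> hz h1 h2; lia.
Qed.

Lemma gamma_sum n m (alpha : 'I_n -> int) (beta : 'I_m -> int) (F : int -> int) (c : int) :
  let gam := sort <=%O ([seq alpha i | i <- enum 'I_n] ++ [seq beta j | j <- enum 'I_m]) in
  \sum_(x < n + m | nth 0 gam x <= c) F (nth 0 gam x) =
  \sum_(i | alpha i <= c) F (alpha i) + \sum_(j | beta j <= c) F (beta j).
Proof.
move=> gam; have sz : size gam = (n + m)%N.
  by rewrite size_sort size_cat !size_map -!enumT !size_enum_ord.
rewrite -(big_mkord (fun x => nth 0 gam x <= c) (fun x => F (nth 0 gam x))).
rewrite -{1}sz -(big_nth 0 (r := gam) (fun y : int => y <= c) F).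
rewrite (perm_big _ (permEl (perm_sort _ _))) big_cat !big_map /=.
by rewrite -!enumT !big_enum_cond.
Qed.

Lemma row_fun (L : fieldType) n (A : 'M[L]_n) : row_monomial A ->
  exists s : 'I_n -> 'I_n, forall i k, (A i k != 0) = (k == s i).
Proof.
move=> h; have [s hs] := fin_all_exists h; exists s => i k.
case: (hs i) => nz uq; apply/idP/eqP => [/uq -> //|->]; exact: nz.
Qed.

Lemma col_fun (L : fieldType) n (A : 'M[L]_n) : col_monomial A ->
  exists s : 'I_n -> 'I_n, forall i k, (A i k != 0) = (i == s k).
Proof.
move=> h; have [s hs] := fin_all_exists h; exists s => i k.
case: (hs k) => nz uq; apply/idP/eqP => [/uq -> //|->]; exact: nz.
Qed.

Lemma rowmono_colmono (L : fieldType) n (A : 'M[L]_n) :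
  A \in unitmx -> row_monomial A -> col_monomial A.
Proof.
move=> uA /row_fun [s hs].
have ex : forall j, exists i, A i j != 0.
  move=> j; case: (boolP [exists i, A i j != 0]) => [/existsP // | /existsPn h0].
  exfalso; move: uA; rewrite unitmxE unitfE -det_tr (expand_det_row _ j) big1 ?eqxx //.
  by move=> k _; rewrite mxE (eqP (negbNE (h0 k))) mul0r.
have [r hr] := fin_all_exists ex.
have sr : cancel r s by move=> j; apply/eqP; rewrite eq_sym -hs.
have [r' rr' r'r] := injF_bij (can_inj sr).
move=> j; exists (r j); split; first exact: hr.
move=> i; rewrite hs => /eqP ->.
by rewrite -{1}(r'r i) sr r'r.
Qed.

Lemma tr_row_col (L : fieldType) n (A : 'M[L]_n) : row_monomial A^T <-> col_monomial A.
Proof.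
split=> h i; have [j [h1 h2]] := h i; exists j; split.
- by move: h1; rewrite mxE.
- by move=> k hk; apply: h2; rewrite mxE.
- by rewrite mxE.
- by move=> k; rewrite mxE => hk; apply: h2.
Qed.

Lemma tr_col_row (L : fieldType) n (A : 'M[L]_n) : col_monomial A^T <-> row_monomial A.
Proof.
split=> h i; have [j [h1 h2]] := h i; exists j; split.
- by move: h1; rewrite mxE.
- by move=> k hk; apply: h2; rewrite mxE.
- by rewrite mxE.
- by move=> k; rewrite mxE => hk; apply: h2.
Qed.

Lemma colmono_rowmono (L : fieldType) n (A : 'M[L]_n) :
  A \in unitmx -> col_monomial A -> row_monomial A.
Proof.
move=> uA h; apply/tr_col_row; apply: rowmono_colmono; rewrite ?unitmx_tr //.
exact/tr_row_col.
Qed.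

Lemma int_nat01 (L : fieldType) (v : L -> int) t (b : bool) :
  discrete_valuation v t -> integral v (b%:R : L).
Proof. by move=> hv; case: b; [right; rewrite (dv_v1 hv) | left]. Qed.

Lemma mono_KdK (L : fieldType) (v : L -> int) t N (M : 'M[L]_N)
    (sg rc : 'I_N -> 'I_N) (dl : 'I_N -> int) (p : 'S_N) (gm : 'I_N -> int) :
  discrete_valuation v t ->
  (forall r s, (M r s != 0) = (s == sg r)) -> (forall r s, (M r s != 0) = (r == rc s)) ->
  (forall r, v (M r (sg r)) = dl r) -> (forall k, gm k = dl (p k)) ->
  in_KdK v M (\row_k t ^ gm k).
Proof.
move=> hv hsg hrc hdl hgm.
have tnz k : (t ^ gm k)^-1 != 0 by rewrite invr_eq0; case: (dv_expz (gm k) hv).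
have vt k : v ((t ^ gm k)^-1) = - gm k.
  by case: (dv_expz (gm k) hv) => nz hz; rewrite (dv_vV hv nz) hz.
have Msg r : M r (sg r) != 0 by rewrite hsg.
exists (\matrix_(r, k) ((r == p k)%:R : L)),
       (\matrix_(k, s) ((t ^ gm k)^-1 * M (p k) s)); split.
- apply: (in_K_of (Q := \matrix_(k, r) ((r == p k)%:R : L))) => [i j|i j|].
  + by rewrite mxE; apply: int_nat01 hv.
  + by rewrite mxE; apply: int_nat01 hv.
  apply/matrixP => r r'; rewrite !mxE (bigD1 ((p^-1)%g r)) //= big1 => [|k nk].
    by rewrite !mxE permKV eqxx mul1r addr0 eq_sym.
  rewrite !mxE; case: eqP => [e|]; last by rewrite mul0r.
  by move: nk; rewrite e permK eqxx.
- apply: (in_K_of (Q := \matrix_(s, k)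
     (if M (p k) s != 0 then (M (p k) s)^-1 * t ^ gm k else 0))) => [k s|s k|].
  + rewrite mxE; have [nz|z] := boolP (M (p k) s != 0); last by rewrite (eqP (negbNE z)) mulr0; left.
    right; rewrite (dv_vM hv (tnz k) nz) vt.
    by move: nz; rewrite hsg => /eqP ->; rewrite hdl hgm addNr.
  + rewrite mxE; have [nz|z] := boolP (M (p k) s != 0); last by left.
    have tz : t ^ gm k != 0 by case: (dv_expz (gm k) hv).
    right; rewrite (dv_vM hv (invr_neq0 nz) tz) (dv_vV hv nz).
    case: (dv_expz (gm k) hv) => _ ->.
    by move: nz; rewrite hsg => /eqP ->; rewrite hdl hgm addrC subrr.
  apply/matrixP => k k'; rewrite !mxE (bigD1 (sg (p k))) //= big1 => [|s ns].
    rewrite !mxE addr0; have [<-|nk] := eqVneq k k'.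
      rewrite Msg -mulrA (mulrA (M _ _)) mulfV ?Msg // mul1r mulVf //.
      by case: (dv_expz (gm k) hv).
    case: ifP => [h|_]; last by rewrite mulr0.
    have := Msg (p k); rewrite hrc => /eqP e1.
    by move: h; rewrite hrc -e1 => /eqP /perm_inj e2; move: nk; rewrite e2 eqxx.
  rewrite !mxE; have -> : M (p k) s = 0 by apply/eqP; apply: contraNT ns => nz; rewrite -hsg.
  by rewrite mulr0 mul0r.
apply/matrixP => r s; rewrite mul_mx_diag !mxE (bigD1 ((p^-1)%g r)) //= big1 => [|k nk].
  rewrite !mxE permKV eqxx mul1r addr0 mulrA mulfV ?mul1r //.
  by case: (dv_expz (gm ((p^-1)%g r)) hv).
rewrite !mxE; case: eqP => [e|]; last by rewrite !mul0r.
by move: nk; rewrite e permK eqxx.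
Qed.

Lemma block_int (L : fieldType) (v : L -> int) n m (P : 'M[L]_n) (Q : 'M[L]_(n, m))
   (R : 'M[L]_(m, n)) (S : 'M[L]_m) :
  (forall i j, integral v (P i j)) -> (forall i j, integral v (Q i j)) ->
  (forall i j, integral v (R i j)) -> (forall i j, integral v (S i j)) ->
  forall i j, integral v (block_mx P Q R S i j).
Proof.
move=> hP hQ hR hS i j.
case: (split_ordP i) => [i' ->|i' ->]; case: (split_ordP j) => [j' ->|j' ->].
- by rewrite block_mxEul.
- by rewrite block_mxEur.
- by rewrite block_mxEdl.
- by rewrite block_mxEdr.
Qed.

Lemma unip_K (L : fieldType) (v : L -> int) t n m (X : 'M[L]_(n, m)) :
  discrete_valuation v t -> (forall i j, integral v (X i j)) ->
  in_K v (block_mx 1%:M X 0 1%:M).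
Proof.
move=> hv hX.
have h1 k : forall i j, integral v ((1%:M : 'M[L]_k) i j).
  by move=> i j; rewrite mxE; apply: int_nat01 hv.
have h0 a b : forall i j, integral v ((0 : 'M[L]_(a, b)) i j) by move=> i j; rewrite mxE; left.
apply: (in_K_of (Q := block_mx 1%:M (- X) 0 1%:M)).
- by apply: block_int.
- apply: block_int => // i j; rewrite mxE; exact: vgeN hv (hX i j).
rewrite mulmx_block !mulmx0 !mul0mx !mul1mx !mulmx1 !addr0 !add0r addNr.
by rewrite -scalar_mx_block.
Qed.

Lemma clear_C (L : fieldType) (v : L -> int) t n m (A : 'M[L]_n) (B : 'M[L]_m)
    (C : 'M[L]_(n, m)) (alpha : 'I_n -> int) (beta : 'I_m -> int)
    (sA rA : 'I_n -> 'I_n) (sB rB : 'I_m -> 'I_m) :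
  discrete_valuation v t ->
  (forall i k, (A i k != 0) = (k == sA i)) -> (forall i k, (A i k != 0) = (i == rA k)) ->
  (forall l j, (B l j != 0) = (j == sB l)) -> (forall l j, (B l j != 0) = (l == rB j)) ->
  (forall i j, A i j != 0 -> alpha i = v (A i j)) ->
  (forall i j, B i j != 0 -> beta j = v (B i j)) ->
  (forall i j, vge v (C i j) (Num.min (alpha i) (beta j))) ->
  exists E1 E2, [/\ in_K v E1, in_K v E2 &
     block_mx A C 0 B = E1 *m block_mx A 0 0 B *m E2].
Proof.
move=> hv hsA hrA hsB hrB hal hbe hC.
pose Y := \matrix_(k, j) \sum_i
   (if (A i k != 0) && (alpha i <= beta j) then C i j / A i k else 0).
pose X := \matrix_(i, l) \sum_j
   (if (B l j != 0) && ~~ (alpha i <= beta j) then C i j / B l j else 0).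
exists (block_mx 1%:M X 0 1%:M), (block_mx 1%:M Y 0 1%:M); split.
- apply: (unip_K hv) => i l; rewrite mxE; apply: (vge_sum _ hv) => j _.
  case: ifP => [/andP[nz ab]|_]; last by left.
  have hm : Num.min (alpha i) (beta j) = beta j.
    by apply/min_idPr; rewrite ltW // ltNge.
  by have := vgeM hv (hC i j) (vge_v v (B l j)^-1); rewrite hm (dv_vV hv nz) -(hbe _ _ nz) addrN.
- apply: (unip_K hv) => k j; rewrite mxE; apply: (vge_sum _ hv) => i _.
  case: ifP => [/andP[nz ab]|_]; last by left.
  have hm : Num.min (alpha i) (beta j) = alpha i by apply/min_idPl.
  by have := vgeM hv (hC i j) (vge_v v (A i k)^-1); rewrite hm (dv_vV hv nz) -(hal _ _ nz) addrN.
rewrite !mulmx_block !mulmx0 !mul0mx !mul1mx !mulmx1 !addr0 !add0r.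
congr block_mx; last by rewrite mul0mx add0r.
apply/matrixP => i j; rewrite !mxE.
have Ai : A i (sA i) != 0 by rewrite hsA.
have Bj : B (rB j) j != 0 by rewrite hrB.
rewrite (bigD1 (sA i)) //= big1 => [|k nk]; last first.
  have -> : A i k = 0 by apply/eqP; apply: contraNT nk => nz; rewrite -hsA.
  by rewrite mul0r.
rewrite (bigD1 (rB j)) //= [Z in _ + (_ + Z)]big1 => [|l nl]; last first.
  have -> : B l j = 0 by apply/eqP; apply: contraNT nl => nz; rewrite -hrB.
  by rewrite mulr0.
rewrite !addr0 !mxE (bigD1 i) //= big1 => [|i' ni]; last first.
  have -> : A i' (sA i) != 0 = false.
    by rewrite hrA; apply/negP => /eqP e; move: Ai; rewrite hrA -e => /eqP e2; rewrite e2 eqxx in ni.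
  by [].
rewrite (bigD1 j) //= [Z in _ + (_ + Z) * _]big1 => [|j' nj]; last first.
  have -> : B (rB j) j' != 0 = false.
    by rewrite hsB; apply/negP => /eqP e; move: Bj; rewrite hsB -e => /eqP e2; rewrite e2 eqxx in nj.
  by [].
rewrite Ai Bj !addr0 /=; case: ifP => _ /=.
  by rewrite mulrC -mulrA mulVf // mulr1 mul0r addr0.
by rewrite mulr0 add0r -mulrA mulVf // mulr1.
Qed.

Lemma sel_mul (R : comRingType) p q r s (G : 'M[R]_(q, r)) (f : 'I_p -> 'I_q) (h : 'I_s -> 'I_r) :
  (\matrix_(a, x) ((x == f a)%:R : R)) *m G *m (\matrix_(y, b) ((y == h b)%:R : R)) =
  \matrix_(a, b) G (f a) (h b).
Proof.
apply/matrixP => a b; rewrite !mxE (bigD1 (h b)) //= big1 => [|y ny]; last first.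
  by rewrite !mxE (negPf ny) mulr0.
rewrite !mxE eqxx mulr1 addr0 (bigD1 (f a)) //= big1 => [|x nx]; last first.
  by rewrite !mxE (negPf nx) mul0r.
by rewrite !mxE eqxx mul1r addr0.
Qed.

Lemma split_l m n (i : 'I_m) : split (lshift n i) = inl i.
Proof. exact: (unsplitK (inl _ i)). Qed.

Lemma split_r m n (i : 'I_n) : split (rshift m i) = inr i.
Proof. exact: (unsplitK (inr _ i)). Qed.

Lemma vprod (L : fieldType) (v : L -> int) t k (F : 'I_k -> L) :
  discrete_valuation v t -> (forall i, F i != 0) ->
  \prod_i F i != 0 /\ v (\prod_i F i) = \sum_i v (F i).
Proof.
move=> hv hF; apply: (big_ind2 (fun x z => x != 0 /\ v x = z)).
- by rewrite oner_neq0 (dv_v1 hv).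
- by move=> x1 x2 y1 y2 [n1 e1] [n2 e2]; rewrite mulf_neq0 // (dv_vM hv n1 n2) e1 e2.
- by move=> i _; split.
Qed.

Lemma forward (L : fieldType) (v : L -> int) t n m (A : 'M[L]_n) (B : 'M[L]_m)
    (C : 'M[L]_(n, m)) (alpha : 'I_n -> int) (beta : 'I_m -> int)
    (sA rA : 'I_n -> 'I_n) (sB rB : 'I_m -> 'I_m) :
  discrete_valuation v t ->
  (forall i k, (A i k != 0) = (k == sA i)) -> (forall i k, (A i k != 0) = (i == rA k)) ->
  (forall l j, (B l j != 0) = (j == sB l)) -> (forall l j, (B l j != 0) = (l == rB j)) ->
  (forall i j, A i j != 0 -> alpha i = v (A i j)) ->
  (forall i j, B i j != 0 -> beta j = v (B i j)) ->
  let gamma := sort <=%O ([seq alpha i | i <- enum 'I_n] ++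
                           [seq beta j | j <- enum 'I_m]) in
  in_KdK v (block_mx A C 0 B) (\row_(k < n + m) t ^ (nth 0 gamma k)) ->
  forall i j, vge v (C i j) (Num.min (alpha i) (beta j)).
Proof.
move=> hv hsA hrA hsB hrB hal hbe gamma [k1 [k2 [[_ K1 _] [_ K2 _] eg]]] i j.
have [->|nz] := eqVneq (C i j) 0; first by left.
case: (leP (Num.min (alpha i) (beta j)) (v (C i j))) => [h|]; first by right.
set c := v (C i j); rewrite lt_min => /andP[ci cj]; exfalso.
have rAsA i' : rA (sA i') = i' by apply/esym/eqP; rewrite -hrA hsA.
have sBrB j' : sB (rB j') = j' by apply/esym/eqP; rewrite -hsB hrB.
pose PA := [set i' | alpha i' <= c]; pose PB := [set j' | beta j' <= c].
pose eA : 'I_#|PA| -> 'I_n := enum_val; pose eB : 'I_#|PB| -> 'I_m := enum_val.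
pose kk := (#|PA| + (1 + #|PB|))%N.
pose rsel (a : 'I_kk) : 'I_(n + m) := match split a with
  | inl a1 => lshift m (eA a1)
  | inr a2 => match split a2 with inl _ => lshift m i | inr b => rshift n (rB (eB b)) end end.
pose csel (a : 'I_kk) : 'I_(n + m) := match split a with
  | inl a1 => lshift m (sA (eA a1))
  | inr a2 => match split a2 with inl _ => rshift n j | inr b => rshift n (eB b) end end.
pose g := block_mx A C 0 B.
pose Ms := \matrix_(a, b) g (rsel a) (csel b).
have trig : is_trig_mx Ms^T.
  apply/is_trig_mxP => a b; rewrite 2!mxE /rsel /csel /g.
  case: (split_ordP a) => [a1 ->|a2 ->]; case: (split_ordP b) => [b1 ->|b2 ->].
  - rewrite block_mxEul /= => ab; apply/eqP; apply: contraTT ab; rewrite hsA.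
    by move=> /eqP/(congr1 rA); rewrite !rAsA => /enum_val_inj ->; rewrite ltnn.
  - case: (split_ordP b2) => [u ->|b3 ->].
    + rewrite block_mxEul => _; apply/eqP; apply: contraTT ci; rewrite hsA.
      move=> /eqP/(congr1 rA); rewrite !rAsA => e.
      by have := enum_valP a1; rewrite -/(eA a1) e inE -leNgt.
    + by rewrite block_mxEdl mxE.
  - move=> ab; exfalso; move: ab (ltn_ord b1) => /= h1 h2.
    by move: (ltn_trans h1 h2); rewrite ltnNge leq_addr.
  case: (split_ordP a2) => [u ->|a3 ->]; case: (split_ordP b2) => [u' ->|b3 ->].
  - by move=> /= ab; exfalso; move: ab (ltn_ord u) (ltn_ord u'); lia.
  - rewrite block_mxEdr => _; apply/eqP; apply: contraTT cj; rewrite hrB.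
    move=> /eqP/(congr1 sB); rewrite !sBrB => e.
    by have := enum_valP b3; rewrite -/(eB b3) e inE -leNgt.
  - by move=> /= ab; exfalso; move: ab (ltn_ord u'); lia.
  rewrite block_mxEdr /= => ab; apply/eqP; apply: contraTT ab; rewrite hrB.
  by move=> /eqP/(congr1 sB); rewrite !sBrB => /enum_val_inj ->; lia.
have dMs : \det Ms = (\prod_(a1 < #|PA|) A (eA a1) (sA (eA a1))) *
                    (C i j * \prod_(b3 < #|PB|) B (rB (eB b3)) (eB b3)).
  rewrite -det_tr det_trig // big_split_ord big_split_ord big_ord1 /=.
  congr (_ * (_ * _)).
  - by apply: eq_bigr => a1 _; rewrite 2!mxE /rsel /csel split_l /g block_mxEul.
  - by rewrite 2!mxE /rsel /csel !split_r !split_l /g block_mxEur.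
  - by apply: eq_bigr => b3 _; rewrite 2!mxE /rsel /csel !split_r /g block_mxEdr.
have hA1 : forall a1, A (eA a1) (sA (eA a1)) != 0 by move=> a1; rewrite hsA.
have hB1 : forall b3, B (rB (eB b3)) (eB b3) != 0 by move=> b3; rewrite hrB.
have [nzA vA] := vprod hv hA1.
have [nzB vB] := vprod hv hB1.
have sumA : \sum_a1 v (A (eA a1) (sA (eA a1))) = \sum_(i' in PA) alpha i'.
  by rewrite (big_enum_val (A := [in PA])) /=; apply: eq_bigr => a1 _; rewrite -hal.
have sumB : \sum_b3 v (B (rB (eB b3)) (eB b3)) = \sum_(j' in PB) beta j'.
  by rewrite (big_enum_val (A := [in PB])) /=; apply: eq_bigr => b3 _; rewrite -hbe.
have detnz : \det Ms != 0 by rewrite dMs !mulf_neq0.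
have vdet : v (\det Ms) = \sum_(i' in PA) alpha i' + (c + \sum_(j' in PB) beta j').
  by rewrite dMs (dv_vM hv) ?mulf_neq0 // (dv_vM hv) // vA vB sumA sumB.
pose Q := [set x : 'I_(n + m) | nth 0 gamma x <= c].
have cnt (T : finType) (P : pred T) : \sum_(x | P x) (1 : int) = (#|[set x | P x]|)%:R.
  by rewrite -sumr_const; apply: eq_bigl => x; rewrite inE.
have cardQ : #|Q| = (#|PA| + #|PB|)%N.
  have e := gamma_sum alpha beta (fun _ => 1) c.
  have e2 : (#|Q|%:R : int) = \sum_(x < n + m | nth 0 gamma x <= c) 1.
    by rewrite -sumr_const; apply: eq_bigl => x; rewrite inE.
  apply/eqP; rewrite -(@eqr_nat int) natrD e2; apply/eqP; apply: (etrans e).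
  by rewrite !cnt.
have sumQ : \sum_(x in Q) nth 0 gamma x = \sum_(i' in PA) alpha i' + \sum_(j' in PB) beta j'.
  have e := gamma_sum alpha beta (fun y => y) c.
  have e2 : \sum_(x in Q) nth 0 gamma x = \sum_(x < n + m | nth 0 gamma x <= c) nth 0 gamma x.
    by apply: eq_bigl => x; rewrite inE.
  rewrite e2; apply: (etrans e); congr (_ + _); apply: eq_bigl => x; by rewrite inE.
pose Xs : 'M[L]_(kk, n + m) := \matrix_(a, x) ((x == rsel a)%:R).
pose Ys : 'M[L]_(n + m, kk) := \matrix_(y, b) ((y == csel b)%:R).
have eMs : Ms = (Xs *m k1) *m diag_mx (\row_(k < n + m) t ^ (nth 0 gamma k)) *m (k2 *m Ys).
  by rewrite !mulmxA -(mulmxA Xs) -(mulmxA Xs) -eg /Xs /Ys sel_mul.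
have hX : forall a x, integral v ((Xs *m k1) a x).
  apply: (vge_mulmx hv) => // a x; rewrite mxE; exact: int_nat01 hv.
have hY : forall a x, integral v ((k2 *m Ys) a x).
  apply: (vge_mulmx hv) => // a x; rewrite mxE; exact: int_nat01 hv.
have hb : forall S : {set 'I_(n + m)}, #|S| = kk ->
    \sum_(x in Q) nth 0 gamma x + c + 1 <= \sum_(x in S) nth 0 gamma x.
  move=> S hS; rewrite lezD1; apply: set_bound; rewrite hS -/Q cardQ /kk.
  by rewrite addnCA add1n.
have := cb_bound (g := fun x => nth 0 gamma x) hv hX hY hb; rewrite -eMs.
case => [e|h]; first by rewrite e eqxx in detnz.
move: h; rewrite vdet sumQ; lia.
Qed.

Lemma big_fenum (T : finType) (P : pred T) (F : T -> nat) :
  \sum_(j <- Finite.enum T | P j) F j = \sum_(j | P j) F j.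
Proof. by rewrite [index_enum _]unlock. Qed.

Unset Implicit Arguments. Set Strict Implicit.

Theorem corollary2p2 (L : fieldType) (v : L -> int) (t : L)
    (hv : discrete_valuation v t) (n m : nat)
    (A : 'M[L]_n) (B : 'M[L]_m) (C : 'M[L]_(n, m))
    (alpha : 'I_n -> int) (beta : 'I_m -> int) :
  A \in unitmx -> B \in unitmx ->
  row_monomial A -> col_monomial B ->
  (forall i j, A i j != 0 -> alpha i = v (A i j)) ->
  (forall i j, B i j != 0 -> beta j = v (B i j)) ->
  let gamma := sort <=%O ([seq alpha i | i <- enum 'I_n] ++
                           [seq beta j | j <- enum 'I_m]) in
  in_KdK v (block_mx A C 0 B) (\row_(k < n + m) t ^ (nth 0 gamma k))
  <-> (forall i j, vge v (C i j) (Num.min (alpha i) (beta j))).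
Proof.
move=> uA uB rmA cmB hal hbe gamma.
have cmA := rowmono_colmono uA rmA; have rmB := colmono_rowmono uB cmB.
have [sA hsA] := row_fun rmA; have [rA hrA] := col_fun cmA.
have [sB hsB] := row_fun rmB; have [rB hrB] := col_fun cmB.
split; first exact: (forward hv hsA hrA hsB hrB hal hbe).
move=> hC; have [E1 [E2 [KE1 KE2 ->]]] := clear_C hv hsA hrA hsB hrB hal hbe hC.
pose M : 'M[L]_(n + m) := block_mx A 0 0 B.
pose sgM (r : 'I_(n + m)) : 'I_(n + m) :=
  match split r with inl i => lshift m (sA i) | inr l => rshift n (sB l) end.
pose rcM (s : 'I_(n + m)) : 'I_(n + m) :=
  match split s with inl k => lshift m (rA k) | inr j => rshift n (rB j) end.
pose dl (r : 'I_(n + m)) : int :=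
  match split r with inl i => alpha i | inr l => beta (sB l) end.
have hsg : forall r s, (M r s != 0) = (s == sgM r).
  move=> r s; rewrite /sgM /M.
  case: (split_ordP r) => [i ->|l ->]; case: (split_ordP s) => [k ->|k ->].
  - by rewrite block_mxEul eq_lshift hsA.
  - by rewrite block_mxEur mxE eqxx eq_rlshift.
  - by rewrite block_mxEdl mxE eqxx eq_lrshift.
  - by rewrite block_mxEdr eq_rshift hsB.
have hrc : forall r s, (M r s != 0) = (r == rcM s).
  move=> r s; rewrite /rcM /M.
  case: (split_ordP s) => [k ->|k ->]; case: (split_ordP r) => [i ->|i ->].
  - by rewrite block_mxEul eq_lshift hrA.
  - by rewrite block_mxEdl mxE eqxx eq_rlshift.
  - by rewrite block_mxEur mxE eqxx eq_lrshift.
  - by rewrite block_mxEdr eq_rshift hrB.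
have hdl : forall r, v (M r (sgM r)) = dl r.
  move=> r; rewrite /sgM /dl /M; case: (split_ordP r) => [i ->|l ->].
  - by rewrite block_mxEul (hal i (sA i)) // hsA.
  - by rewrite block_mxEdr (hbe l (sB l)) // hsB.
have sBinj : injective sB.
  by apply: (can_inj (g := rB)) => l; apply/esym/eqP; rewrite -hrB hsB.
have pe0 : perm_eq ([seq alpha i | i <- enum 'I_n] ++ [seq beta j | j <- enum 'I_m] : seq int)
    (map dl (enum 'I_(n + m))).
  apply/seq.permP => P.
  rewrite count_cat -!sum1_count !big_map !big_fenum big_split_ord /dl; congr (_ + _).
    by apply: eq_bigl => i; rewrite split_l.
  rewrite (reindex_inj sBinj) /=; apply: eq_bigl => l; by rewrite split_r.
have pe : perm_eq gamma [tuple dl r | r < n + m] by rewrite /gamma perm_sort; exact: pe0.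
have [p hp] := tuple_permP pe.
have hgm : forall k : 'I_(n + m), nth 0 gamma k = dl (p k).
  by move=> k; rewrite hp -tnth_nth !tnth_mktuple.
have [k1 [k2 [K1 K2 eM]]] := mono_KdK hv hsg hrc hdl hgm.
exists (E1 *m k1), (k2 *m E2); split; try exact: in_K_mul hv _ _.
by rewrite /M in eM; rewrite eM !mulmxA.
Qed.
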